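(* Let $\eta^+,\eta^-\in(0,1]$, $\eta_d=\frac1{\eta^-}-\eta^+$, $\mathbb{P}_\xi$ a probability measure on $[-1,1]$ with mean zero and cumulative distribution function $F$, $\varphi(z)=\int_{-1}^zF(\xi)\mathrm{d}\xi$, $\dot y(x^b,x^r)=\eta^+x^b-\eta_d x^r\varphi(-x^b/x^r)$ for $x^r>0$, $\dot y(x^b,0)=\eta^+x^b-\eta_d[x^b]^-$, $\dot y^\star\in\mathbb{R}$, and let $g:\mathbb{R}_+\to\mathbb{R}$ be the unique function with $\dot y(g(x^r),x^r)=\dot y^\star$ for all $x^r\ge0$ (it is convex, continuous and nondecreasing). Let $T>0$, $c^b>0$, $c^r\ge0$, and $\bar x^r\ge0$, and consider the problem $\min_{x^r\in[0,\bar x^r]} T\big(c^b g(x^r)-c^r x^r\big)$. Let $g'_+$ and $g'_-$ denote the right and left derivatives of $g$. Define $x^r_\ast$ as follows: if $\bar x^r=0$ or $g'_+(0)\ge c^r/c^b$, then $x^r_\ast=0$; if $\bar x^r>0$ and $g'_-(\bar x^r)<c^r/c^b$, then $x^r_\ast=\bar x^r$; otherwise (i.e. $\bar x^r>0$, $g'_+(0)<c^r/c^b\le g'_-(\bar x^r)$), $x^r_\ast=\min\mathcal{X}_\star$, where $\mathcal{X}_\star=\{x\in(0,\bar x^r]: g'_-(x)\le c^r/c^b\le g'_+(x)\}$ is nonempty and compact. Then $x^r_\ast$ is an optimal solution of the problem.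
   Context: $[a]^-=\max\{-a,0\}$. In the paper, $[0,\bar x^r]$ is the feasible set of the reduced battery bidding problem in the reserve variable $x^r$ (base power $x^b=g(x^r)$), $c^b$ is the price of base power and $c^r$ the reserve price; $\mathcal{X}_\star$ is the set of zeros of the net marginal cost $T(c^bg'(x^r)-c^r)$ in the subdifferential sense. *)

(* Defs.v *)
From HB Require Import structures.
From mathcomp Require Import all_boot all_order all_algebra.
From mathcomp Require Import all_classical all_reals all_analysis.
Set Implicit Arguments. Unset Strict Implicit. Unset Printing Implicit Defensive.
Import Order.TTheory GRing.Theory Num.Theory.
Import numFieldNormedType.Exports.
Local Open Scope classical_set_scope.
Local Open Scope ring_scope.

Section Defs.
Variable R : realType.

Definition negpart (a : R) : R := Num.max (- a) 0.

Definition cdf (P : probability R R) (xi : R) : R :=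
  fine (P [set` `]-oo, xi]]).

(* phi(z) = int_{-1}^z F(xi) dxi  (Lebesgue integral over [-1,z];
   for z < -1 this is 0, which agrees with the oriented integral since F = 0 there) *)
Definition phi (P : probability R R) (z : R) : R :=
  Rintegral lebesgue_measure [set` `[-1, z]] (cdf P).

Definition ydot (P : probability R R) (etap etam : R) (xb xr : R) : R :=
  let etad := etam^-1 - etap in
  if 0 < xr then etap * xb - etad * xr * phi P (- xb / xr)
  else etap * xb - etad * negpart xb.

Definition rderiv (g : R -> R) (x : R) : R :=
  lim ((fun h => (g (x + h) - g x) / h) @ 0^'+).

Definition lderiv (g : R -> R) (x : R) : R :=
  lim ((fun h => (g x - g (x - h)) / h) @ 0^'+).

Definition objective (T cb cr : R) (g : R -> R) (x : R) : R :=
  T * (cb * g x - cr * x).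

Definition optimal (T cb cr xbar : R) (g : R -> R) (x : R) : Prop :=
  0 <= x <= xbar /\
  forall y, 0 <= y <= xbar -> objective T cb cr g x <= objective T cb cr g y.

Definition Xstar (cb cr xbar : R) (g : R -> R) : set R :=
  [set x | 0 < x <= xbar /\ lderiv g x <= cr / cb <= rderiv g x].

End Defs.

(* Main.v *)
Require Import Defs.
From HB Require Import structures.
From mathcomp Require Import all_boot all_order all_algebra.
From mathcomp Require Import all_classical all_reals all_analysis.
From mathcomp Require Import ring lra measurable_realfun.
Import Order.TTheory GRing.Theory Num.Theory.
Import numFieldNormedType.Exports.
Local Open Scope classical_set_scope.
Local Open Scope ring_scope.
Section PhiProps.
Variable (R : realType) (P : probability R R).
Hypothesis P11 : P [set` `[-1, 1]] = 1%E.

Lemma F_ge0 x : 0 <= Defs.cdf P x.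
Proof. by apply: fine_ge0. Qed.

Lemma F_le1 x : Defs.cdf P x <= 1.
Proof.
rewrite /Defs.cdf; have h := probability_le1 P (measurable_itv `]-oo, x]).
by rewrite -lee_fin fineK ?fin_num_measure//; exact: measurable_itv.
Qed.

Lemma F_nd : nondecreasing_fun (Defs.cdf P).
Proof.
move=> x y xy; rewrite /Defs.cdf; apply: fine_le; rewrite ?fin_num_measure//;
  try exact: measurable_itv.
apply: le_measure; rewrite ?inE; try exact: measurable_itv.
move=> z /=; rewrite !in_itv/= => zx; exact: le_trans zx xy.
Qed.

Lemma F_1 x : 1 <= x -> Defs.cdf P x = 1.
Proof.
move=> x1; apply/eqP; rewrite eq_le F_le1/= /Defs.cdf.
have mI : measurable [set` `]-oo, x]] by exact: measurable_itv.
rewrite -lee_fin fineK; last by apply: fin_num_measure.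
rewrite -P11; apply: le_measure; rewrite ?inE; try exact: measurable_itv.
move=> z /=; rewrite !in_itv/= => /andP[_ z1]; exact: le_trans z1 x1.
Qed.

Lemma F_meas (D : set R) : measurable D -> measurable_fun D (Defs.cdf P).
Proof. move=> mD; apply: nondecreasing_measurable => //; exact: F_nd. Qed.

End PhiProps.
Section IntBnd.
Variable R : realType.
Local Notation mu := (@lebesgue_measure R).

Lemma int_bnd (D : set R) (l lo hi : R) (f : R -> R) : measurable D ->
  mu D = l%:E -> measurable_fun D f -> 0 <= lo ->
  (forall x, D x -> lo <= f x <= hi) ->
  ((lo * l)%:E <= \int[mu]_(x in D) (f x)%:E <= (hi * l)%:E)%E.
Proof.
move=> mD muD mf lo0 fb.
have mfE : measurable_fun D (EFin \o f) by exact/measurable_EFinP.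
apply/andP; split.
- rewrite EFinM -muD -integral_cst//; apply: ge0_le_integral => //;
    move=> x Dx; rewrite lee_fin //; case/andP: (fb x Dx) => //.
- rewrite EFinM -muD -integral_cst//; apply: ge0_le_integral => //;
    move=> x Dx; rewrite lee_fin //; case/andP: (fb x Dx) => //.
  move=> h _; exact: le_trans h.
Qed.

Lemma Rint_bnd (D : set R) (l lo hi : R) (f : R -> R) : measurable D ->
  mu D = l%:E -> measurable_fun D f -> 0 <= lo ->
  (forall x, D x -> lo <= f x <= hi) ->
  (\int[mu]_(x in D) (f x)%:E)%E = (Rintegral mu D f)%:E /\
  lo * l <= Rintegral mu D f <= hi * l.
Proof.
move=> mD muD mf lo0 fb.
have /andP[h1 h2] := @int_bnd D l lo hi f mD muD mf lo0 fb.
have fin : (\int[mu]_(x in D) (f x)%:E)%E \is a fin_num.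
  by rewrite fin_numElt (lt_le_trans _ h1) ?ltNyr// (le_lt_trans h2) ?ltry.
split; first by rewrite /Rintegral fineK.
by rewrite -!lee_fin /Rintegral fineK// h1 h2.
Qed.

End IntBnd.
Section Meas.
Variable R : realType.
Local Notation mu := (@lebesgue_measure R).
Lemma mu_cc (a b : R) : a <= b -> mu [set` `[a, b]] = (b - a)%:E.
Proof.
move=> ab; rewrite lebesgue_measure_itv/= lte_fin.
case: ltP => //= h.
have -> : b = a by apply/eqP; rewrite eq_le ab h.
by rewrite subrr.
Qed.
Lemma mu_oc (a b : R) : a <= b -> mu [set` `]a, b]] = (b - a)%:E.
Proof.
move=> ab; rewrite lebesgue_measure_itv/= lte_fin.
case: ltP => //= h.
have -> : b = a by apply/eqP; rewrite eq_le ab h.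
by rewrite subrr.
Qed.
End Meas.
Section Phi.
Variable (R : realType) (P : probability R R).
Hypothesis P11 : P [set` `[-1, 1]] = 1%E.
Local Notation mu := (@lebesgue_measure R).
Local Notation F := (Defs.cdf P).
Definition Roc (z w : R) := Rintegral mu [set` `]z, w]] F.

Lemma Roc_bnd z w lo hi : z <= w -> 0 <= lo ->
  (forall x, z < x <= w -> lo <= F x <= hi) ->
  (integral mu [set` `]z, w]] (fun x => (F x)%:E) = (Roc z w)%:E) /\
  lo * (w - z) <= Roc z w <= hi * (w - z).
Proof.
move=> zw lo0 h.
have mD : measurable [set` `]z, w]] by exact: measurable_itv.
apply: (@Rint_bnd R _ _ lo hi F mD (@mu_oc R _ _ zw) (@F_meas R P _ mD) lo0).
by move=> x /=; rewrite in_itv/=; exact: h.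
Qed.

Lemma phi_bnd z lo hi : -1 <= z -> 0 <= lo ->
  (forall x, -1 <= x <= z -> lo <= F x <= hi) ->
  (integral mu [set` `[-1, z]] (fun x => (F x)%:E) = (phi P z)%:E) /\
  lo * (z + 1) <= phi P z <= hi * (z + 1).
Proof.
move=> zw lo0 h.
have mD : measurable [set` `[-1, z]] by exact: measurable_itv.
have := (@Rint_bnd R _ _ lo hi F mD (@mu_cc R _ _ zw) (@F_meas R P _ mD) lo0).
rewrite opprK; apply.
by move=> x /=; rewrite in_itv/=; exact: h.
Qed.

Lemma phi_lt z : z < -1 -> phi P z = 0.
Proof.
move=> z1; rewrite /phi.
have -> : [set` `[-1, z]] = set0 :> set R.
  by apply/seteqP; split => x //=; rewrite in_itv/= => /andP[a b]; lra.
exact: Rintegral_set0.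
Qed.

Lemma phi_split z w : -1 <= z -> z <= w -> phi P w = phi P z + Roc z w.
Proof.
move=> z1 zw.
have F01 : forall x, 0 <= F x <= 1 by move=> x; rewrite F_ge0 F_le1.
have [e1 _] := @phi_bnd w 0 1 (le_trans z1 zw) (lexx _) (fun x _ => F01 x).
have [e2 _] := @phi_bnd z 0 1 z1 (lexx _) (fun x _ => F01 x).
have [e3 _] := @Roc_bnd z w 0 1 zw (lexx _) (fun x _ => F01 x).
apply: EFin_inj; rewrite EFinD -e1 -e2 -e3.
have -> : [set` `[-1, w]] = [set` `[-1, z]] `|` [set` `]z, w]] :> set R.
  apply/seteqP; split => x /=; rewrite !in_itv/=.
  - move=> /andP[a b]; case: (leP x z) => xz; [left|right]; apply/andP; split => //.
  - by case=> /andP[a b]; apply/andP; split; lra.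
apply: ge0_integral_setU; try exact: measurable_itv.
- apply/measurable_EFinP; apply: (@F_meas R P); apply: measurableU; exact: measurable_itv.
- by move=> x _; rewrite lee_fin F_ge0.
- rewrite disj_set2E; apply/eqP/seteqP; split => x //=.
  by rewrite !in_itv/= => -[/andP[a b] /andP[c d]]; lra.
Qed.

Lemma F01 x : 0 <= F x <= 1.
Proof. by rewrite F_ge0 F_le1. Qed.

Lemma phi_ge0 z : 0 <= phi P z.
Proof.
case: (ltP z (-1)) => z1; first by rewrite phi_lt.
have [_ /andP[h _]] := @phi_bnd z 0 1 z1 (lexx _) (fun x _ => F01 x).
by rewrite mul0r in h.
Qed.

Lemma phi_lip z w : z <= w -> 0 <= phi P w - phi P z <= w - z.
Proof.
move=> zw; case: (ltP z (-1)) => z1.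
  rewrite (phi_lt _ z1) subr0 phi_ge0/=.
  case: (ltP w (-1)) => w1; first by rewrite (phi_lt _ w1); lra.
  have [_ /andP[_ h]] := @phi_bnd w 0 1 w1 (lexx _) (fun x _ => F01 x).
  lra.
rewrite (phi_split _ _ z1 zw) addrAC subrr add0r.
have [_ /andP[h1 h2]] := @Roc_bnd z w 0 1 zw (lexx _) (fun x _ => F01 x).
by rewrite mul0r in h1; rewrite h1/=; rewrite mul1r in h2.
Qed.

Lemma phi_cvx z m w : z < m -> m < w ->
  (phi P m - phi P z) * (w - m) <= (phi P w - phi P m) * (m - z).
Proof.
move=> zm mw.
have /andP[Bp _] := phi_lip _ _ (ltW mw).
case: (ltP m (-1)) => m1.
  rewrite (phi_lt _ m1) (@phi_lt z); last lra.
  have := phi_ge0 w; rewrite subrr mul0r => ?; apply: mulr_ge0 => //; lra.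
have Fm0 := @F_ge0 R P m.
have HA : phi P m - phi P z <= F m * (m - z).
  case: (ltP z (-1)) => z1.
    rewrite (phi_lt _ z1) subr0.
    have [_ /andP[_ h]] := @phi_bnd m 0 (F m) m1 (lexx _)
      (fun x hx => ltac:(rewrite F_ge0/=; apply: F_nd; by case/andP: hx)).
    apply: (le_trans h); apply: ler_wpM2l => //; lra.
  rewrite (phi_split _ _ z1 (ltW zm)) addrAC subrr add0r.
  have [_ /andP[_ h]] := @Roc_bnd z m 0 (F m) (ltW zm) (lexx _)
      (fun x hx => ltac:(rewrite F_ge0/=; apply: F_nd; by case/andP: hx)).
  exact: h.
have HB : F m * (w - m) <= phi P w - phi P m.
  rewrite (phi_split _ _ m1 (ltW mw)) addrAC subrr add0r.
  have [_ /andP[h _]] := @Roc_bnd m w (F m) 1 (ltW mw) Fm0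
      (fun x hx => ltac:(rewrite F_le1 andbT; apply: F_nd; case/andP: hx => a _; exact: ltW a)).
  exact: h.
have wm0 : 0 < w - m by lra.
have mz0 : 0 < m - z by lra.
apply: (le_trans (ler_wpM2r (ltW wm0) HA)).
rewrite mulrAC; nra.
Qed.

Lemma phi_ge z : z - 1 <= phi P z.
Proof.
case: (ltP z 1) => z1; first by have := phi_ge0 z; lra.
have m1 : (-1 : R) <= 1 by lra.
rewrite (phi_split _ _ m1 z1).
have [_ /andP[h _]] := @Roc_bnd 1 z 1 1 z1 ler01
  (fun x hx => ltac:(rewrite F_1 ?lexx//; case/andP: hx => a _; exact: ltW a)).
have := phi_ge0 1; lra.
Qed.
End Phi.
Section Comb.
Variable R : realType.
Lemma comb_of_3slope (f : R -> R) :
  (forall z m w, z < m -> m < w -> (f m - f z) * (w - m) <= (f w - f m) * (m - z)) ->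
  forall s u v, 0 <= s <= 1 -> f (s * u + (1 - s) * v) <= s * f u + (1 - s) * f v.
Proof.
move=> h3.
have key : forall s u v, 0 < s < 1 -> u < v ->
    f (s * u + (1 - s) * v) <= s * f u + (1 - s) * f v.
  move=> s u v /andP[s0 s1] uv; set m := s * u + (1 - s) * v.
  have um : u < m by rewrite /m; nra.
  have mv : m < v by rewrite /m; nra.
  have := h3 _ _ _ um mv.
  have -> : v - m = s * (v - u) by rewrite /m; ring.
  have -> : m - u = (1 - s) * (v - u) by rewrite /m; ring.
  move=> H; nra.
move=> s u v /andP[s0 s1].
case: (eqVneq s 0) => [->|sn0]; first by rewrite !mul0r !add0r subr0 !mul1r.
case: (eqVneq s 1) => [->|sn1]; first by rewrite subrr !mul0r !addr0 !mul1r.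
have s01 : 0 < s < 1 by rewrite !lt_neqAle s0 s1 eq_sym sn0 sn1.
case: (ltgtP u v) => [uv|vu|->]; first exact: key.
- have s01' : 0 < 1 - s < 1 by case/andP: s01 => ? ?; apply/andP; split; lra.
  have := key _ _ _ s01' vu; have -> : 1 - (1 - s) = s by ring.
  by rewrite addrC [X in _ <= X]addrC.
- by rewrite -!mulrDl addrC subrK !mul1r.
Qed.
End Comb.
Section Ydot.
Variable (R : realType) (P : probability R R).
Hypothesis P11 : P [set` `[-1, 1]] = 1%E.
Variables (ep em : R).
Hypothesis ep01 : 0 < ep <= 1.
Hypothesis em01 : 0 < em <= 1.

Definition Hc (b x : R) := if 0 < x then x * phi P (- b / x) else negpart b.
Let ed := em^-1 - ep.

Lemma ed_ge0 : 0 <= ed.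
Proof.
case/andP: ep01 => e0 e1; case/andP: em01 => m0 m1.
rewrite /ed subr_ge0 (le_trans e1)// invr_ge1 ?unitfE ?gt_eqF//.
Qed.

Lemma ydotE b x : ydot P ep em b x = ep * b - ed * Hc b x.
Proof. by rewrite /ydot /Hc; case: ifP => _ //; rewrite mulrA. Qed.

Lemma negpart_ge0 (a : R) : 0 <= negpart a.
Proof. by rewrite /negpart le_max lexx orbT. Qed.
Lemma negpart_ge (a : R) : - a <= negpart a.
Proof. by rewrite /negpart le_max lexx. Qed.
Lemma negpart_le (a c : R) : - a <= c -> 0 <= c -> negpart a <= c.
Proof. by move=> h1 h2; rewrite /negpart ge_max h1 h2. Qed.

Lemma Hc_anti b b' x : 0 <= x -> b <= b' -> Hc b' x <= Hc b x.
Proof.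
move=> x0 bb; rewrite /Hc; case: ifP => x0'.
  apply: ler_wpM2l => //.
  have /andP[h _] := @phi_lip R P (- b' / x) (- b / x)
    ltac:(by rewrite ler_pM2r ?invr_gt0// lerN2).
  lra.
apply: negpart_le; last exact: negpart_ge0.
by apply: le_trans (negpart_ge b); rewrite lerN2.
Qed.

Lemma ydot_mono b b' x : 0 <= x -> b <= b' ->
  ep * (b' - b) <= ydot P ep em b' x - ydot P ep em b x.
Proof.
move=> x0 bb; rewrite !ydotE.
have := Hc_anti _ _ _ x0 bb; have := ed_ge0 => h1 h2.
have : ed * Hc b' x <= ed * Hc b x by apply: ler_wpM2l.
lra.
Qed.

Lemma Hc_ge b h : 0 < h -> negpart b - h <= Hc b h.
Proof.
move=> h0; rewrite /Hc h0.
have p1 := @phi_ge R P P11 (- b / h).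
have p0 := @phi_ge0 R P (- b / h).
have : h * (- b / h - 1) <= h * phi P (- b / h) by apply: ler_wpM2l => //; exact: ltW.
have : h * 0 <= h * phi P (- b / h) by apply: ler_wpM2l => //; exact: ltW.
rewrite mulrBr mulr1 mulrCA divff ?gt_eqF// mulr1 mulr0 => q0 q1.
have : negpart b <= h * phi P (- b / h) + h.
  by apply: negpart_le; lra.
lra.
Qed.

Lemma ydot_h b h : 0 < h -> ydot P ep em b h <= ydot P ep em b 0 + ed * h.
Proof.
move=> h0; rewrite !ydotE /Hc ltxx h0.
have := Hc_ge _ _ h0; rewrite /Hc h0 => q.
have := ed_ge0 => e0.
have : ed * (negpart b - h) <= ed * (h * phi P (- b / h)) by apply: ler_wpM2l.
lra.
Qed.
End Ydot.
Section HcCvx.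
Variable (R : realType) (P : probability R R).

Lemma Hc_mixed b1 b2 x1 t : 0 < x1 -> 0 < t <= 1 ->
  Hc R P (t * b1 + (1 - t) * b2) (t * x1) <=
  t * (x1 * phi P (- b1 / x1)) + (1 - t) * negpart b2.
Proof.
move=> x10 /andP[t0 t1].
have tx : 0 < t * x1 by apply: mulr_gt0.
rewrite /Hc tx.
set z1 := - b1 / x1; set d := - ((1 - t) * b2) / (t * x1).
have -> : - (t * b1 + (1 - t) * b2) / (t * x1) = z1 + d.
  rewrite /z1 /d; field; rewrite ?gt_eqF//.
have dE : t * x1 * d = - ((1 - t) * b2) by rewrite /d mulrC divfK ?gt_eqF.
case: (leP b2 0) => b20.
- have dge : 0 <= d.
    by rewrite /d divr_ge0 ?(ltW tx)// oppr_ge0; apply: mulr_ge0_le0 => //; lra.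
  have /andP[_ h] := @phi_lip R P z1 (z1 + d) ltac:(lra).
  have -> : negpart b2 = - b2 by rewrite /negpart max_l// oppr_ge0.
  have : t * x1 * phi P (z1 + d) <= t * x1 * (phi P z1 + d).
    by apply: ler_wpM2l; [exact: ltW | lra].
  rewrite mulrDr dE; lra.
- have dle : d <= 0.
    rewrite /d mulNr oppr_le0 divr_ge0 ?(ltW tx)//; apply: mulr_ge0; lra.
  have /andP[h _] := @phi_lip R P (z1 + d) z1 ltac:(lra).
  have -> : negpart b2 = 0 by rewrite /negpart max_r// oppr_le0 ltW.
  have : t * x1 * phi P (z1 + d) <= t * x1 * phi P z1.
    by apply: ler_wpM2l; [exact: ltW | lra].
  rewrite mulr0 addr0 mulrA; lra.
Qed.

Lemma ge0_cases (x : R) : 0 <= x -> x = 0 \/ 0 < x.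
Proof. by rewrite le_eqVlt => /orP[/eqP <-|->]; [left|right]. Qed.

Lemma Hc_cvx b1 b2 x1 x2 t : 0 <= x1 -> 0 <= x2 -> 0 <= t <= 1 ->
  Hc R P (t * b1 + (1 - t) * b2) (t * x1 + (1 - t) * x2) <=
  t * Hc R P b1 x1 + (1 - t) * Hc R P b2 x2.
Proof.
move=> x10 x20 /andP[t0 t1].
case: (eqVneq t 0) => [->|tn0]; first by rewrite !mul0r !add0r subr0 !mul1r.
case: (eqVneq t 1) => [->|tn1]; first by rewrite subrr !mul0r !addr0 !mul1r.
have t0' : 0 < t by rewrite lt_neqAle eq_sym tn0.
have t1' : t < 1 by rewrite lt_neqAle tn1.
case: (ge0_cases _ x10) => [x1z|x1p].
- rewrite x1z mulr0 add0r; case: (ge0_cases _ x20) => [x2z|x2p]; last first.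
  + have t'0 : 0 < 1 - t <= 1 by apply/andP; split; lra.
    have := @Hc_mixed b2 b1 x2 (1 - t) x2p t'0.
    have -> : 1 - (1 - t) = t by ring.
    rewrite addrC => h; apply: (le_trans h).
    rewrite /Hc x2p ltxx addrC; exact: lexx.
  + rewrite x2z mulr0 /Hc ltxx.
    apply: negpart_le.
    * have := @negpart_ge R b1; have := @negpart_ge R b2 => h1 h2.
      have : t * - b1 <= t * negpart b1 by apply: ler_wpM2l.
      have : (1 - t) * - b2 <= (1 - t) * negpart b2 by apply: ler_wpM2l; lra.
      lra.
    * apply: addr_ge0; apply: mulr_ge0; rewrite ?negpart_ge0//; lra.
case: (ge0_cases _ x20) => [x2z|x2p].
  rewrite x2z mulr0 addr0.
  have := @Hc_mixed b1 b2 x1 t x1p ltac:(apply/andP; split; lra).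
  have -> : Hc R P b1 x1 = x1 * phi P (- b1 / x1) by rewrite /Hc x1p.
  by have -> : Hc R P b2 0 = negpart b2 by rewrite /Hc ltxx.
set x := t * x1 + (1 - t) * x2.
have xp : 0 < x.
  rewrite /x; have := mulr_gt0 t0' x1p.
  have : 0 <= (1 - t) * x2 by apply: mulr_ge0; lra.
  lra.
rewrite /Hc xp x1p x2p.
set s := t * x1 / x.
have s01 : 0 <= s <= 1.
  have a1 : 0 <= t * x1 by apply: mulr_ge0; lra.
  have a2 : 0 <= (1 - t) * x2 by apply: mulr_ge0; lra.
  apply/andP; split; first by rewrite /s divr_ge0 // ltW.
  by rewrite /s ler_pdivrMr// mul1r /x lerDl.
have -> : - (t * b1 + (1 - t) * b2) / x =
    s * (- b1 / x1) + (1 - s) * (- b2 / x2).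
  rewrite /s; have xn0 : x != 0 by rewrite gt_eqF.
  have -> : 1 - t * x1 / x = (1 - t) * x2 / x.
    by apply: (mulIf xn0); rewrite mulrBl mul1r !divfK// /x; ring.
  field; rewrite ?gt_eqF//.
have h := @comb_of_3slope R (phi P) (@phi_cvx R P) s (- b1 / x1) (- b2 / x2) s01.
have : x * phi P (s * (- b1 / x1) + (1 - s) * (- b2 / x2)) <=
       x * (s * phi P (- b1 / x1) + (1 - s) * phi P (- b2 / x2)).
  by apply: ler_wpM2l => //; exact: ltW.
have -> : x * (s * phi P (- b1 / x1) + (1 - s) * phi P (- b2 / x2)) =
          t * (x1 * phi P (- b1 / x1)) + (1 - t) * (x2 * phi P (- b2 / x2)).
  have xn0 : x != 0 by rewrite gt_eqF.
  have hs1 : x * s = t * x1 by rewrite /s mulrC divfK.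
  have hs2 : x * (1 - s) = (1 - t) * x2 by rewrite mulrBr mulr1 hs1 /x; ring.
  by rewrite mulrDr (mulrA x s) (mulrA x (1 - s)) hs1 hs2 -!mulrA.
done.
Qed.
End HcCvx.
Section G.
Variable (R : realType) (P : probability R R).
Hypothesis P11 : P [set` `[-1, 1]] = 1%E.
Variables (ep em ystar : R) (g : R -> R).
Hypothesis ep01 : 0 < ep <= 1.
Hypothesis em01 : 0 < em <= 1.
Hypothesis hg : forall xr, 0 <= xr -> ydot P ep em (g xr) xr = ystar.

Lemma g_le b v : 0 <= b -> ystar <= ydot P ep em v b -> g b <= v.
Proof.
move=> b0 hv; case: (leP (g b) v) => // gv.
have := @ydot_mono R P ep em ep01 em01 v (g b) b b0 (ltW gv).
rewrite hg// => h.
have : ep * (g b - v) <= 0 by lra.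
case/andP: ep01 => e0 _.
rewrite pmulr_rle0// => h'; lra.
Qed.

Lemma g_cvx3 a b c : 0 <= a -> a < b -> b < c ->
  (g b - g a) * (c - b) <= (g c - g b) * (b - a).
Proof.
move=> a0 ab bc.
set t := (c - b) / (c - a).
have ca : 0 < c - a by lra.
have can0 : c - a != 0 by rewrite gt_eqF.
have t01 : 0 <= t <= 1.
  apply/andP; split; first by rewrite /t divr_ge0 //; lra.
  by rewrite /t ler_pdivrMr// mul1r; lra.
have bE : b = t * a + (1 - t) * c.
  by rewrite /t; field.
have hv : g b <= t * g a + (1 - t) * g c.
  apply: g_le; first lra.
  rewrite [in X in ydot _ _ _ _ X]bE ydotE.
  have := @Hc_cvx R P (g a) (g c) a c t a0 ltac:(lra) t01.
  have := @ed_ge0 R ep em ep01 em01.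
  set ed := em^-1 - ep => ed0 hc.
  have := hg _ a0; have := hg _ (ltac:(lra) : 0 <= c).
  rewrite !ydotE -/ed => e1 e2.
  have : ed * Hc R P (t * g a + (1 - t) * g c) (t * a + (1 - t) * c) <=
         ed * (t * Hc R P (g a) a + (1 - t) * Hc R P (g c) c).
    by apply: ler_wpM2l.
  move=> h.
  have -> : ystar = t * ystar + (1 - t) * ystar by ring.
  rewrite -{1}e2 -e1.
  lra.
have e1 : t * (c - a) = c - b by rewrite /t divfK.
have e2 : (1 - t) * (c - a) = b - a by rewrite mulrBl mul1r e1; ring.
rewrite -e1 -e2.
have H2 : 0 <= (c - a) * (t * g a + (1 - t) * g c - g b).
  by apply: mulr_ge0; lra.
lra.
Qed.

Lemma g_lb h : 0 < h -> - (em^-1 - ep) * h <= ep * (g h - g 0).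
Proof.
move=> h0.
have := @ydot_h R P P11 ep em ep01 em01 (g h) h h0.
have := @ed_ge0 R ep em ep01 em01.
move: (em^-1 - ep) => ed ed0.
rewrite hg; last exact: ltW.
case: (leP (g 0) (g h)) => g0h.
  case/andP: ep01 => e0 _.
  have : 0 <= ep * (g h - g 0) by apply: mulr_ge0; lra.
  have : 0 <= ed * h by apply: mulr_ge0 => //; exact: ltW.
  move=> *; lra.
have := @ydot_mono R P ep em ep01 em01 (g h) (g 0) 0 (lexx _) (ltW g0h).
rewrite (hg _ (lexx _)) => q1 q2.
have : ep * (g 0 - g h) <= ed * h by lra.
have -> : ep * (g h - g 0) = - (ep * (g 0 - g h)) by ring.
move=> *; lra.
Qed.
End G.
Section Cvx.
Variables (R : realType) (g : R -> R) (K : R).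
Hypothesis cvx3 : forall a b c, 0 <= a -> a < b -> b < c ->
  (g b - g a) * (c - b) <= (g c - g b) * (b - a).
Hypothesis lb0 : forall h, 0 < h -> - K * h <= g h - g 0.

Definition sl (a b : R) := (g b - g a) / (b - a).

Lemma frac_le (A X p r : R) : 0 < p -> 0 < r -> A * r <= X * p -> A / p <= X / r.
Proof.
move=> p0 r0 h; rewrite ler_pdivrMr// mulrAC ler_pdivlMr//.
Qed.

Lemma sl_12_13 a b c : 0 <= a -> a < b -> b < c -> sl a b <= sl a c.
Proof.
move=> a0 ab bc; have := cvx3 _ _ _ a0 ab bc => h.
apply: frac_le; try lra; nra.
Qed.

Lemma sl_13_23 a b c : 0 <= a -> a < b -> b < c -> sl a c <= sl b c.
Proof.
move=> a0 ab bc; have := cvx3 _ _ _ a0 ab bc => h.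
apply: frac_le; try lra; nra.
Qed.

Lemma sl_12_23 a b c : 0 <= a -> a < b -> b < c -> sl a b <= sl b c.
Proof.
move=> a0 ab bc; have := cvx3 _ _ _ a0 ab bc => h.
apply: frac_le; try lra; nra.
Qed.

Lemma sl_lb a b : 0 <= a -> a < b -> - K <= sl a b.
Proof.
move=> a0 ab.
have h0 : - K <= sl 0 b.
  rewrite /sl subr0 ler_pdivlMr; last lra.
  by have := lb0 _ (ltac:(lra) : 0 < b).
case: (ge0_cases _ _ a0) => [->//|ap].
exact: le_trans h0 (sl_13_23 _ _ _ (lexx _) ap ab).
Qed.

Lemma sl_le a b : 0 <= a -> a < b -> - K * (b - a) <= g b - g a.
Proof.
move=> a0 ab; have := sl_lb _ _ a0 ab; rewrite /sl ler_pdivlMr //; lra.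
Qed.

Lemma sl_ub a b : 0 <= a -> a < b -> g b - g a <= sl b (b + 1) * (b - a).
Proof.
move=> a0 ab; have := sl_12_23 _ _ _ a0 ab (ltac:(lra) : b < b + 1) => h.
have h' := h; move: h'; rewrite {1}/sl ler_pdivrMr; last lra.
by rewrite mulrC.
Qed.
End Cvx.
Section Der.
Variables (R : realType) (g : R -> R) (K : R).
Hypothesis cvx3 : forall a b c, 0 <= a -> a < b -> b < c ->
  (g b - g a) * (c - b) <= (g c - g b) * (b - a).
Hypothesis lb0 : forall h, 0 < h -> - K * h <= g h - g 0.
Local Notation sl := (@sl R g).

Let q x := fun h => (g (x + h) - g x) / h.
Let Sq x := [set q x h | h in [set` `]0, +oo[]].

Lemma qE x h : q x h = sl x (x + h).
Proof. by rewrite /q /sl; congr (_ / _); ring. Qed.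

Lemma q_lb x : 0 <= x -> has_lbound (Sq x).
Proof.
move=> x0; exists (- K) => _ [h /= hp <-].
rewrite in_itv/= andbT in hp.
rewrite qE; apply: (@sl_lb R g K cvx3 lb0 x _ x0); lra.
Qed.

Lemma rd_inf x : 0 <= x -> rderiv g x = inf (Sq x).
Proof.
move=> x0; apply: cvg_lim => //.
apply: (@nondecreasing_at_right_cvgr _ (q x) 0 (BInfty _ false)) => //.
- move=> h1 h2; rewrite !in_itv/= !andbT => h1p h2p h12.
  rewrite !qE; case: (eqVneq h1 h2) => [->//|hne].
  have h12' : h1 < h2 by rewrite lt_neqAle hne h12.
  apply: (@sl_12_13 R g cvx3); lra.
- exact: q_lb.
Qed.

Lemma rd_le x w : 0 <= x -> x < w -> rderiv g x <= sl x w.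
Proof.
move=> x0 xw; rewrite rd_inf//.
have -> : sl x w = q x (w - x) by rewrite qE addrC subrK.
apply: ge_inf; first exact: q_lb.
by exists (w - x) => //=; rewrite in_itv/= andbT subr_gt0.
Qed.

Lemma rd_ge x c : 0 <= x -> (forall w, x < w -> c * (w - x) <= g w - g x) ->
  c <= rderiv g x.
Proof.
move=> x0 hw; rewrite rd_inf//; apply: lb_le_inf.
  by exists (q x 1), 1 => //=; rewrite in_itv/= andbT.
move=> _ [h /= hp <-]; rewrite in_itv/= andbT in hp.
rewrite /q ler_pdivlMr//.
by have := hw (x + h) ltac:(lra); rewrite addrAC subrr add0r mulrC.
Qed.

Let p x := fun h => (g x - g (x - h)) / h.
Let Sp x := [set p x h | h in [set` `]0, x]]].

Lemma pE x h : p x h = sl (x - h) x.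
Proof. by rewrite /p /sl; congr (_ / _); ring. Qed.

Lemma p_ub x : 0 < x -> has_ubound (Sp x).
Proof.
move=> x0; exists (sl x (x + 1)) => _ [h /= hp <-].
rewrite in_itv/= in hp; case/andP: hp => h0 hx.
rewrite pE; apply: (@sl_12_23 R g cvx3); lra.
Qed.

Lemma ld_sup x : 0 < x -> lderiv g x = sup (Sp x).
Proof.
move=> x0; apply: cvg_lim => //.
apply: (@nonincreasing_at_right_cvgr _ (p x) 0 (BRight x)).
- by rewrite bnd_simp.
- move=> h1 h2; rewrite !in_itv/= => /andP[h1p h1x] /andP[h2p h2x] h12.
  rewrite !pE; case: (eqVneq h1 h2) => [->//|hne].
  have h12' : h1 < h2 by rewrite lt_neqAle hne h12.
  apply: (@sl_13_23 R g cvx3); lra.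
- exact: p_ub.
Qed.

Lemma ld_ge x y : 0 <= y -> y < x -> sl y x <= lderiv g x.
Proof.
move=> y0 yx; rewrite ld_sup; last lra.
have -> : sl y x = p x (x - y) by rewrite pE opprB addrC subrK.
apply: ub_le_sup; first by apply: p_ub; lra.
by exists (x - y) => //=; rewrite in_itv/=; apply/andP; split; lra.
Qed.

Lemma ld_le x w : 0 < x -> x < w -> lderiv g x <= sl x w.
Proof.
move=> x0 xw; rewrite ld_sup//; apply: ge_sup.
  by exists (p x x), x => //=; rewrite in_itv/= lexx andbT.
move=> _ [h /= hp <-]; rewrite in_itv/= in hp; case/andP: hp => h0 hx.
rewrite pE; apply: (@sl_12_23 R g cvx3); lra.
Qed.

Lemma ld_le' x c : 0 < x -> (forall y, 0 <= y -> y < x -> g x - g y <= c * (x - y)) ->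
  lderiv g x <= c.
Proof.
move=> x0 hy; rewrite ld_sup//; apply: ge_sup.
  by exists (p x x), x => //=; rewrite in_itv/= lexx andbT.
move=> _ [h /= hp <-]; rewrite in_itv/= in hp; case/andP: hp => h0 hx.
rewrite /p ler_pdivrMr//.
have := hy (x - h) ltac:(lra) ltac:(lra).
by have -> : x - (x - h) = h by ring.
Qed.
End Der.
Theorem theorem2 (R : realType) (etap etam : R) (P : probability R R)
  (ystar : R) (g : R -> R) (T cb cr xbar : R) :
  0 < etap <= 1 -> 0 < etam <= 1 ->
  P [set` `[-1, 1]] = 1%E ->
  (\int[P]_x (x%:E) = 0)%E ->
  (forall xr, 0 <= xr -> ydot P etap etam (g xr) xr = ystar) ->
  0 < T -> 0 < cb -> 0 <= cr -> 0 <= xbar ->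
  [/\ (xbar = 0 \/ cr / cb <= rderiv g 0) -> optimal T cb cr xbar g 0,
      (0 < xbar /\ lderiv g xbar < cr / cb) -> optimal T cb cr xbar g xbar
    & (0 < xbar /\ rderiv g 0 < cr / cb <= lderiv g xbar) ->
      exists2 x, (Xstar cb cr xbar g x /\
                  forall y, Xstar cb cr xbar g y -> x <= y)
               & optimal T cb cr xbar g x].
Proof.
move=> ep01 em01 P11 _ hg T0 cb0 cr0 xb0.
have cvx3 := @g_cvx3 R P etap etam ystar g ep01 em01 hg.
set K := (etam^-1 - etap) / etap.
have lb0 : forall h, 0 < h -> - K * h <= g h - g 0.
  move=> h h0; have := @g_lb R P P11 etap etam ystar g ep01 em01 hg h h0.
  have e0 : 0 < etap by case/andP: ep01.
  have -> : - K * h = (- (etam^-1 - etap) * h) / etap.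
  by rewrite /K !mulNr mulrAC.
  rewrite ler_pdivrMr// => H; lra.
have RDle := @rd_le R g K cvx3 lb0.
have RDge := @rd_ge R g K cvx3 lb0.
have LDge := @ld_ge R g cvx3.
have LDle := @ld_le R g cvx3.
have LDle' := @ld_le' R g cvx3.
have SLle := @sl_le R g K cvx3 lb0.
have SLub := @sl_ub R g cvx3.
set c := cr / cb.
have opt : forall x, 0 <= x <= xbar ->
    (forall y, 0 <= y <= xbar -> g x - c * x <= g y - c * y) ->
    optimal T cb cr xbar g x.
  move=> x hx hy; split => // y hy'; rewrite /objective.
  apply: ler_wpM2l; first exact: ltW.
  have e : cr = c * cb by rewrite /c divfK // gt_eqF.
  have := hy y hy'; rewrite e => h.
  have := ler_wpM2l (ltW cb0) h; lra.
have slge : forall x w d, x < w -> d <= sl R g x w -> d * (w - x) <= g w - g x.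
  by move=> x w d xw; rewrite /sl ler_pdivlMr // subr_gt0.
have slle : forall x w d, x < w -> sl R g x w <= d -> g w - g x <= d * (w - x).
  by move=> x w d xw; rewrite /sl ler_pdivrMr // subr_gt0.
split.
- case=> [xb00|hc].
    apply: opt; first by rewrite lexx xb0.
    move=> y /andP[y0 yx]; rewrite xb00 in yx.
    by have -> : y = 0 by apply/eqP; rewrite eq_le yx y0.
  apply: opt; first by rewrite lexx xb0.
  move=> y /andP[y0 _]; case: (ge0_cases _ _ y0) => [->|yp]; first by rewrite lexx.
  have := slge 0 y c yp (le_trans hc (RDle _ _ (lexx 0) yp)).
  lra.
- case=> xp hlt; apply: opt; first by rewrite lexx xb0.
  move=> y /andP[y0 yx]; case: (eqVneq y xbar) => [->|yne]; first by rewrite lexx.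
  have yx' : y < xbar by rewrite lt_neqAle yne yx.
  have := slle y xbar c yx' (ltW (le_lt_trans (LDge _ _ y0 yx') hlt)).
  lra.
case=> xp /andP[h0 h1].
set A := [set x | 0 <= x <= xbar /\ forall w, x <= w -> c * (w - x) <= g w - g x].
have Axb : A xbar.
  split; first by rewrite lexx xb0.
  move=> w xw; case: (eqVneq w xbar) => [->|wne]; first by rewrite !subrr mulr0.
  have xw' : xbar < w by rewrite lt_neqAle eq_sym wne xw.
  exact: slge xbar w c xw' (le_trans h1 (LDle _ _ xp xw')).
have A0 : A !=set0 by exists xbar.
have Alb : lbound A 0 by move=> x [/andP[x0 _] _].
have hinf : has_inf A by split => //; exists 0.
set m := inf A.
have m0 : 0 <= m := lb_le_inf A0 Alb.
have mA : forall x, A x -> m <= x by move=> x Ax; exact: (ge_inf hinf.2).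
have mxb : m <= xbar := mA _ Axb.
have hm : forall w, m <= w -> c * (w - m) <= g w - g m.
  move=> w mw; case: (leP (c * (w - m)) (g w - g m)) => // hlt'; exfalso.
  have wm : m < w.
    rewrite lt_neqAle mw andbT; apply/negP => /eqP e.
    by move: hlt'; rewrite e !subrr mulr0 ltxx.
  set eps := c * (w - m) - (g w - g m).
  have eps0 : 0 < eps by rewrite /eps subr_gt0.
  set L := `|K| + `|c| + 1.
  have L0 : 0 < L by rewrite /L ltr_wpDl // addr_ge0.
  set d := Num.min (w - m) (eps / L).
  have d0 : 0 < d by rewrite /d lt_min subr_gt0 wm divr_gt0.
  have [x Ax xlt] := inf_adherent d0 hinf.
  have mx : m <= x := mA x Ax.
  have xw : x <= w.
    have : d <= w - m by rewrite /d ge_min lexx.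
    rewrite -/m in xlt; lra.
  have := Ax.2 w xw.
  case: (eqVneq x m) => [xm|xne].
    by rewrite xm => H; move: hlt'; rewrite ltNge H.
  have mx' : m < x by rewrite lt_neqAle eq_sym xne mx.
  have := SLle _ _ m0 mx'.
  have dL : d <= eps / L by rewrite /d ge_min lexx orbT.
  have xmL : (x - m) * L < eps.
    rewrite -ltr_pdivlMr//; apply: lt_le_trans dL; rewrite -/m in xlt; lra.
  have cK : c + K <= L by rewrite /L; have := ler_norm c; have := ler_norm K; lra.
  have : (c + K) * (x - m) <= L * (x - m) by apply: ler_wpM2r => //; lra.
  rewrite /eps in xmL eps0 *; move=> *; nra.
have mp : 0 < m.
  case: (ge0_cases _ _ m0) => [m00|//]; exfalso.
  have : c <= rderiv g 0.
    apply: RDge => // w w0; have := hm w; rewrite m00 => H; exact: H (ltW w0).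
  by rewrite leNgt h0.
have hleft : forall y, 0 <= y -> y < m -> g m - g y <= c * (m - y).
  move=> y y0 ym.
  have dec : forall y', y < y' -> y' < m -> g y' - g y < c * (y' - y).
    move=> y' yy' y'm.
    have nA : ~ A y' by move=> Ay; have := mA _ Ay; rewrite leNgt y'm.
    case: (pselect (exists w, y' <= w /\ g w - g y' < c * (w - y'))) => [[w [yw hw]]|hno];
      last first.
      exfalso; apply: nA; split; first by apply/andP; split; lra.
      move=> w yw; case: (leP (c * (w - y')) (g w - g y')) => // hh; exfalso.
      by apply: hno; exists w.
    have wy : y' < w.
      rewrite lt_neqAle yw andbT; apply/negP => /eqP e.
      by move: hw; rewrite e !subrr mulr0 ltxx.
    have cv := cvx3 _ _ _ y0 yy' wy.
    case: (ltP (g y' - g y) (c * (y' - y))) => // hge; exfalso.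
    have p1 : c * (y' - y) * (w - y') <= (g y' - g y) * (w - y').
      by apply: ler_wpM2r => //; lra.
    have p2 : (g w - g y') * (y' - y) < c * (w - y') * (y' - y).
      by rewrite ltr_pM2r ?subr_gt0.
    nra.
  case: (leP (g m - g y) (c * (m - y))) => // hgt; exfalso.
  set eps := g m - g y - c * (m - y).
  have eps0 : 0 < eps by rewrite /eps subr_gt0.
  set U := sl R g m (m + 1).
  set L := `|U| + `|c| + 1.
  have L0 : 0 < L by rewrite /L ltr_wpDl // addr_ge0.
  set d := Num.min ((m - y) / 2) (eps / L / 2).
  have d0 : 0 < d by rewrite /d lt_min !divr_gt0 // subr_gt0.
  have d1 : d <= (m - y) / 2 by rewrite /d ge_min lexx.
  have d2 : d <= eps / L / 2 by rewrite /d ge_min lexx orbT.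
  have dL : d * L <= eps / 2.
    by rewrite -ler_pdivlMr // mulrAC; move: d2; rewrite [eps / L / 2]mulrAC.
  have y1 : y < m - d by lra.
  have y2 : m - d < m by lra.
  have := dec _ y1 y2.
  have := SLub (m - d) m ltac:(lra) y2.
  have -> : m - (m - d) = d by ring.
  move=> hub hdec.
  have UL : U * d - c * d <= L * d.
    have := ler_norm U; have := ler_norm (- c); rewrite normrN => n1 n2.
    have : (U - c) * d <= L * d by apply: ler_wpM2r; rewrite /L; lra.
    lra.
  rewrite -/U in hub; rewrite /eps in eps0 dL; lra.
have Xm : Xstar cb cr xbar g m.
  split; first by rewrite mp mxb.
  apply/andP; split.
    by apply: LDle' => // y y0 ym; exact: hleft.
  by apply: RDge => // w mw; apply: hm; exact: ltW.
exists m.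
  split => // y [/andP[y0 yx] /andP[_ hy]].
  apply: mA; split; first by rewrite (ltW y0) yx.
  move=> w yw; case: (eqVneq w y) => [->|wne]; first by rewrite !subrr mulr0.
  have yw' : y < w by rewrite lt_neqAle eq_sym wne yw.
  exact: slge y w c yw' (le_trans hy (RDle _ _ (ltW y0) yw')).
apply: opt; first by rewrite m0 mxb.
move=> y /andP[y0 _]; case: (leP m y) => my.
  have := hm y my; lra.
have := hleft y y0 my; lra.
Qed.
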